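(* Let $(G,u)$ be a countable unperforated partially ordered abelian group with order unit $u$. Then $$\bigcap_{\tau\in S(G,u)}\tau(G)=\{\lambda\in\mathbb R:\ \exists g\in G \text{ such that } \tau(g)=\lambda \text{ for all }\tau\in S(G,u)\}.$$
   Context: $u$ is an order unit: for every $g$ there is $n\in\mathbb Z^+$ with $nu-g\ge0$. Unperforated: $ng\ge0$ for some $n\in\mathbb N$ implies $g\ge0$. $S(G,u)$ is the set of states, i.e. homomorphisms $\tau:G\to\mathbb R$ with $\tau(G^+)\ge0$ and $\tau(u)=1$. *)

(* Defs.v *)
From HB Require Import structures.
From mathcomp Require Import all_boot all_order all_algebra.
From mathcomp Require Import classical_sets boolp.
From mathcomp Require Import Rstruct.
Set Implicit Arguments. Unset Strict Implicit. Unset Printing Implicit Defensive.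
Import GRing.Theory Num.Theory.
Local Open Scope ring_scope.
Local Open Scope classical_set_scope.

(* A partially ordered abelian group is given by an abelian group G together
   with its positive cone P = G^+ (g <= h iff h - g \in P). *)
Definition is_pos_cone (G : zmodType) (P : set G) : Prop :=
  P 0 /\ (forall x y, P x -> P y -> P (x + y)) /\
  (forall x, P x -> P (- x) -> x = 0).

Definition is_order_unit (G : zmodType) (P : set G) (u : G) : Prop :=
  forall g, exists n : nat, (0 < n)%N /\ P (u *+ n - g).

Definition unperforated (G : zmodType) (P : set G) : Prop :=
  forall (g : G) (n : nat), (0 < n)%N -> P (g *+ n) -> P g.

Definition is_state (G : zmodType) (P : set G) (u : G) (tau : G -> Rdefinitions.R) : Prop :=
  (forall x y, tau (x + y) = tau x + tau y) /\
  (forall x, P x -> 0 <= tau x) /\ tau u = 1.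

Definition states (G : zmodType) (P : set G) (u : G) : set (G -> Rdefinitions.R) :=
  [set tau | is_state P u tau].

(* Main.v *)
From Stdlib Require Import Reals Lra Lia.
From Coquelicot Require Import Coquelicot.
Open Scope R_scope.

Definition epsof (a b h : R) : R :=
  if Req_dec_T ((1-h)*a + h*b) 0 then h/2 else h.

Lemma epsof_spec a b h : b <> 0 -> 0 < h ->
  (epsof a b h = h \/ epsof a b h = h/2) /\
  (1 - epsof a b h) * a + epsof a b h * b <> 0.
Proof.
  intros Hb Hh. unfold epsof.
  destruct (Req_dec_T ((1-h)*a + h*b) 0) as [E|E]; split; auto.
  intro E2. apply Hb.
  assert (a = b) by nra. subst. nra.
Qed.





Definition stepf {X : Type} (e : nat -> X) (T : X -> X -> R) (B : X -> R) (lam : R)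
  (k : nat) (p : (X -> R) * R) : (X -> R) * R :=
  let s := fst p in let h := snd p in
  let x := e k in let t := T x in
  let ep := epsof (s x - lam) (t x - lam) h in
  let s' := fun y => (1 - ep) * s y + ep * t y in
  let m := Rabs (s' x - lam) in
  (s', Rmin (h/2) (m / (4 * (B x + 1)))).

Fixpoint seqf {X : Type} (e : nat -> X) (T : X -> X -> R) (B : X -> R) (lam : R)
  (s0 : X -> R) (k : nat) : (X -> R) * R :=
  match k with
  | O => (s0, /2)
  | S k => stepf e T B lam k (seqf e T B lam s0 k)
  end.

Lemma key_lemma (X : Type) (e : nat -> X) (St : (X -> R) -> Prop) (lam : R)
  (T : X -> X -> R) (B : X -> R) (s0 : X -> R) :
  (forall x, exists k, e k = x) ->
  (forall s t ep, St s -> St t -> 0 <= ep <= 1 -> St (fun x => (1-ep) * s x + ep * t x)) ->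
  (forall (f : nat -> X -> R) (h : X -> R), (forall k, St (f k)) ->
      (forall x, is_lim_seq (fun k => f k x) (h x)) -> St h) ->
  (forall x s, St s -> Rabs (s x) <= B x) ->
  (forall x, St (T x) /\ T x x <> lam) ->
  St s0 ->
  exists sig, St sig /\ forall x, sig x <> lam.
Proof.
  intros He Hconv Hlim Hbd HT Hs0.
  set (sq := seqf e T B lam s0).
  set (s := fun k => fst (sq k)).
  set (h := fun k => snd (sq k)).
  set (ep := fun k => epsof (s k (e k) - lam) (T (e k) (e k) - lam) (h k)).
  assert (HB0 : forall x, 0 <= B x).
  { intro x. specialize (Hbd x s0 Hs0). pose proof (Rabs_pos (s0 x)). lra. }
  assert (Hsk : forall k y, s (S k) y = (1 - ep k) * s k y + ep k * T (e k) y).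
  { intros. reflexivity. }
  assert (Hhk : forall k, h (S k) = Rmin (h k / 2)
      (Rabs (s (S k) (e k) - lam) / (4 * (B (e k) + 1)))).
  { intros. reflexivity. }
  assert (Hep : forall k, 0 < h k ->
     (ep k = h k \/ ep k = h k / 2) /\ s (S k) (e k) - lam <> 0).
  { intros k Hk. destruct (HT (e k)) as [_ HT2].
    destruct (epsof_spec (s k (e k) - lam) (T (e k) (e k) - lam) (h k)) as [E1 E2].
    - intro Z. apply HT2. lra.
    - exact Hk.
    - split. exact E1. rewrite Hsk. fold (ep k) in E2. intro Z; apply E2. lra. }
  assert (Hinv : forall k, 0 < h k <= /2 /\ St (s k)).
  { induction k as [|k IH].
    - unfold h, s, sq; simpl. split; [lra|]. exact Hs0.
    - destruct IH as [[H1 H2] H3].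
      destruct (HT (e k)) as [HT1 HT2].
      destruct (Hep k H1) as [E Hm].
      assert (0 < Rabs (s (S k) (e k) - lam)) by (apply Rabs_pos_lt; exact Hm).
      assert (0 < 4 * (B (e k) + 1)) by (pose proof (HB0 (e k)); lra).
      split.
      + rewrite Hhk.
        assert (0 < Rabs (s (S k) (e k) - lam) / (4 * (B (e k) + 1)))
          by (apply Rdiv_lt_0_compat; lra).
        pose proof (Rmin_l (h k / 2) (Rabs (s (S k) (e k) - lam) / (4 * (B (e k) + 1)))).
        unfold Rmin in *; destruct Rle_dec; lra.
      + change (St (fun y => (1 - ep k) * s k y + ep k * T (e k) y)).
        apply Hconv; auto. lra. }
  assert (Hh : forall k, 0 < h k <= /2) by (intro k; apply Hinv).
  assert (Hh2 : forall k, h (S k) <= h k / 2).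
  { intro k. rewrite Hhk. apply Rmin_l. }
  assert (Hmarg : forall k, h (S k) <= Rabs (s (S k) (e k) - lam) / (4 * (B (e k) + 1))).
  { intro k. rewrite Hhk. apply Rmin_r. }
  assert (Hepb : forall k, 0 < ep k <= h k).
  { intro k. destruct (Hh k) as [H1 _]. destruct (Hep k H1) as [[E|E] _]; lra. }
  assert (Hdiff : forall k y, Rabs (s (S k) y - s k y) <= 2 * B y * h k).
  { intros k y. rewrite Hsk.
    replace ((1 - ep k) * s k y + ep k * T (e k) y - s k y) with (ep k * (T (e k) y - s k y)) by ring.
    rewrite Rabs_mult. destruct (Hepb k) as [E1 E2]. rewrite (Rabs_pos_eq (ep k)) by lra.
    pose proof (Hbd y _ (proj1 (HT (e k)))). pose proof (Hbd y _ (proj2 (Hinv k))).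
    pose proof (Rabs_triang (T (e k) y) (- s k y)). rewrite Rabs_Ropp in H1.
    assert (Rabs (T (e k) y - s k y) <= 2 * B y) by (unfold Rminus; lra).
    pose proof (Rabs_pos (T (e k) y - s k y)). pose proof (HB0 y). nra. }
  assert (Htail : forall k j y, Rabs (s (j + k)%nat y - s k y) <= 4 * B y * (h k - h (j + k)%nat)).
  { intros k j y. induction j as [|j IH].
    - simpl. replace (s k y - s k y) with 0 by ring. rewrite Rabs_R0. lra.
    - change (S j + k)%nat with (S (j + k)).
      pose proof (Hdiff (j + k)%nat y). pose proof (Hh2 (j + k)%nat). pose proof (HB0 y).
      pose proof (Rabs_triang (s (S (j + k)) y - s (j + k)%nat y) (s (j + k)%nat y - s k y)).
      replace (s (S (j + k)) y - s (j + k)%nat y + (s (j + k)%nat y - s k y))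
        with (s (S (j + k)) y - s k y) in H2 by ring.
      assert (2 * B y * h (j + k)%nat <= 4 * B y * (h (j + k)%nat - h (S (j + k)))) by nra.
      nra. }
  assert (Hgeo : forall k, h k <= (/2) ^ k).
  { induction k as [|k IH]. - simpl. pose proof (Hh 0%nat). lra.
    - simpl. pose proof (Hh2 k). lra. }
  assert (Htail' : forall k n y, (k <= n)%nat -> Rabs (s n y - s k y) <= 4 * B y * (/2) ^ k).
  { intros k n y Hkn. replace n with ((n - k) + k)%nat by lia.
    pose proof (Htail k (n - k)%nat y). pose proof (Hh ((n - k) + k)%nat).
    pose proof (Hgeo k). pose proof (HB0 y). nra. }
  assert (Hcv : forall y, ex_finite_lim_seq (fun k => s k y)).
  { intro y. apply ex_lim_seq_cauchy_corr. intro eps.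
    pose proof (HB0 y).
    assert (Hp : 0 < eps / (8 * B y + 1)) by (apply Rdiv_lt_0_compat; [apply cond_pos|lra]).
    assert (Ha : Rabs (/2) < 1) by (rewrite Rabs_pos_eq; lra).
    destruct (pow_lt_1_zero (/2) Ha _ Hp) as [N HN].
    exists N. intros n m Hn Hm.
    pose proof (HN N (le_n N)). rewrite Rabs_pos_eq in H0 by (apply pow_le; lra).
    pose proof (Htail' N n y Hn). pose proof (Htail' N m y Hm).
    pose proof (Rabs_triang (s n y - s N y) (- (s m y - s N y))). rewrite Rabs_Ropp in H3.
    replace (s n y - s N y + - (s m y - s N y)) with (s n y - s m y) in H3 by ring.
    assert (8 * B y * (/2) ^ N < eps).
    { apply Rmult_lt_compat_l with (r := 8 * B y + 1) in H0; [|lra].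
      unfold Rdiv in H0. rewrite <- Rmult_assoc, (Rmult_comm _ eps), Rmult_assoc, Rinv_r, Rmult_1_r in H0 by lra.
      pose proof (pow_le (/2) N ltac:(lra)). pose proof (cond_pos eps). nra. }
    lra. }
  set (L := fun y => real (Lim_seq (fun k => s k y))).
  assert (HL : forall y, is_lim_seq (fun k => s k y) (L y)).
  { intro y. unfold L. apply Lim_seq_correct'. apply Hcv. }
  assert (HLb : forall k y, Rabs (L y - s k y) <= 4 * B y * h k).
  { intros k y.
    assert (H1 : is_lim_seq (fun n => Rabs (s (n + k)%nat y - s k y)) (Rabs (L y - s k y))).
    { apply (is_lim_seq_abs _ (Finite (L y - s k y))).
      apply (is_lim_seq_minus' _ (fun _ => s k y)).
      - apply (is_lim_seq_incr_n (fun n => s n y) k (L y)). apply HL.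
      - apply is_lim_seq_const. }
    assert (Hp : forall n, Rabs (s (n + k)%nat y - s k y) <= 4 * B y * h k).
    { intro n. pose proof (Htail k n y). pose proof (Hh (n + k)%nat). pose proof (HB0 y). nra. }
    pose proof (is_lim_seq_le _ _ _ _ Hp H1 (is_lim_seq_const _)) as H2.
    simpl in H2. exact H2. }
  exists L. split.
  - apply (Hlim s L). intro k; apply Hinv. exact HL.
  - intros x Hx. destruct (He x) as [k Hk]. subst x.
    pose proof (HLb (S k) (e k)). pose proof (Hmarg k). pose proof (HB0 (e k)).
    destruct (Hh k) as [Hk1 _]. destruct (Hep k Hk1) as [_ Hm].
    pose proof (Rabs_pos_lt _ Hm). rewrite Hx in H.
    set (m := Rabs (s (S k) (e k) - lam)) in *.
    rewrite <- Rabs_Ropp in H. replace (- (lam - s (S k) (e k))) with (s (S k) (e k) - lam) in H by ring.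
    fold m in H.
    assert (h (S k) * (4 * (B (e k) + 1)) <= m).
    { apply Rmult_le_compat_r with (r := 4 * (B (e k) + 1)) in H0; [|lra].
      unfold Rdiv in H0. rewrite Rmult_assoc, Rinv_l, Rmult_1_r in H0 by lra. exact H0. }
    pose proof (Hh (S k)). nra.
Qed.
Close Scope R_scope.

Require Import Defs.
From HB Require Import structures.
From mathcomp Require Import all_boot all_order all_algebra.
From mathcomp Require Import classical_sets boolp.
From mathcomp Require Import Rstruct.
From mathcomp Require Import ring lra.
Import GRing.Theory Num.Theory.
Local Open Scope ring_scope.
Local Open Scope classical_set_scope.

Lemma add_facts (G : zmodType) (tau : G -> Rdefinitions.R) :
  (forall x y, tau (x + y) = tau x + tau y) ->
  tau 0 = 0 /\ (forall x, tau (- x) = - tau x) /\ (forall x n, tau (x *+ n) = tau x *+ n).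
Proof.
move=> H.
have H0 : tau 0 = 0.
  have := H 0 0; rewrite addr0 => E.
  have : tau 0 + tau 0 - tau 0 = tau 0 - tau 0 by rewrite -E.
  by rewrite addrK subrr.
split=> //; split.
  move=> x; apply/eqP; rewrite -addr_eq0 -H addrC subrr H0 //.
move=> x; elim=> [|n IH]; first by rewrite !mulr0n.
by rewrite !mulrS H IH.
Qed.

Lemma state_bound (G : zmodType) (P : set G) (u : G) :
  is_order_unit P u -> forall g, exists B : Rdefinitions.R,
    forall tau, states P u tau -> Rle (Rabs (tau g)) B.
Proof.
move=> Hu g.
have [n [_ Hn]] := Hu g.
have [m [_ Hm]] := Hu (- g).
exists (1 *+ n + 1 *+ m) => tau [Hadd [Hpos H1]].
have [_ [HN HM]] := add_facts _ _ Hadd.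
rewrite opprK in Hm.
have A := Hpos _ Hn. have B := Hpos _ Hm.
rewrite Hadd HN HM H1 in A. rewrite Hadd HM H1 in B.
apply: Rabs_le; split; apply/RleP.
  change (- ((1 *+ n : R) + 1 *+ m) <= tau g).
  rewrite opprD -[tau g]add0r; apply: lerD.
    by rewrite oppr_le0 ler0n.
  by rewrite -subr_ge0 opprK addrC.
rewrite -[tau g]addr0; apply: lerD.
  by rewrite -subr_ge0.
by rewrite ler0n.
Qed.

Lemma states_conv (G : zmodType) (P : set G) (u : G) (s t : G -> R) (ep : R) :
  states P u s -> states P u t -> Rle 0 ep /\ Rle ep 1 ->
  states P u (fun x => (1 - ep) * s x + ep * t x).
Proof.
move=> [Hs [Hsp Hs1]] [Ht [Htp Ht1]] [/RleP e0 /RleP e1].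
split; [move=> x y; rewrite Hs Ht /=; ring|split].
  move=> x Px; apply: addr_ge0; apply: mulr_ge0 => //; try by [apply: Hsp|apply: Htp].
  by rewrite subr_ge0.
by rewrite /= Hs1 Ht1; ring.
Qed.

Lemma states_lim (G : zmodType) (P : set G) (u : G) (f : nat -> G -> R) (h : G -> R) :
  (forall k, states P u (f k)) ->
  (forall x, is_lim_seq (fun k => f k x) (h x)) -> states P u h.
Proof.
move=> Hf Hl; split; [|split].
- move=> x y.
  have E1 := is_lim_seq_unique _ _ (Hl (x + y)).
  have L2 : is_lim_seq (fun k => f k (x + y)) (Rplus (h x) (h y)).
    apply: (is_lim_seq_ext (fun k => Rplus (f k x) (f k y))).
      by move=> k; have [Ha _] := Hf k; rewrite Ha.
    exact: is_lim_seq_plus'.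
  have E2 := is_lim_seq_unique _ _ L2.
  by rewrite E1 in E2; case: E2.
- move=> x Px; apply/RleP.
  have := is_lim_seq_le (fun _ => 0) (fun k => f k x) (Rbar.Finite (0:R)) (Rbar.Finite (h x)).
  apply => //; last exact: is_lim_seq_const.
  by move=> k; have [_ [Hp _]] := Hf k; apply/RleP; apply: Hp.
- have E1 := is_lim_seq_unique _ _ (Hl u).
  have L2 : is_lim_seq (fun k => f k u) (Rbar.Finite (1:R)).
    apply: (is_lim_seq_ext (fun _ => (1:R))); last exact: is_lim_seq_const.
    by move=> k; have [_ [_ H1]] := Hf k.
  have E2 := is_lim_seq_unique _ _ L2.
  by rewrite E1 in E2; case: E2.
Qed.

Theorem mainTheorem10 (G : countZmodType) (P : set G) (u : G) :
  is_pos_cone P -> is_order_unit P u -> unperforated P ->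
  \bigcap_(tau in states P u) (tau @` setT) =
  [set l : Rdefinitions.R | exists g : G, forall tau, states P u tau -> tau g = l].
Proof.
move=> Hc Hu Hunp; rewrite eqEsubset; split; last first.
  by move=> l [g Hg] tau Htau; exists g => //; apply: Hg.
move=> l Hl /=; apply: contrapT => Hno.
have Hne : forall g, exists tau, states P u tau /\ tau g <> l.
  move=> g; apply: contrapT => Hn; apply: Hno; exists g => tau Htau.
  by apply: contrapT => Hd; apply: Hn; exists tau.
have [T HT] := choice Hne.
have [B HB] := choice (state_bound _ _ _ Hu).
have [sig [Hsig Hsig2]] := key_lemma _ (fun k => odflt 0 (unpickle k)) (states P u) l T B (T 0)
  (fun x => ex_intro _ (pickle x) (congr1 (odflt 0) (pickleK x)))
  (fun s t ep Hs Ht He => states_conv _ _ _ _ _ _ Hs Ht He)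
  (fun f h Hf Hl => states_lim _ _ _ _ _ Hf Hl)
  (fun x s Hs => HB x s Hs)
  (fun x => HT x)
  (proj1 (HT 0)).
have [g _ Hg] := Hl sig Hsig.
exact: Hsig2 g Hg.
Qed.
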